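(* Let $\mathcal C^*$ be as in the context and let $\ell$ be a positive integer with $|\mathcal C^*|\ge\ell$. Then there is a set $\mathbb T$ of neighborhood trees such that: (T1) $\ell\le|\mathcal V|\le\ell^2$ for every $(\mathcal V,E,r)\in\mathbb T$; (T2) $\bigcup_{(\mathcal V,E,r)\in\mathbb T}\mathcal V=\mathcal C^*$; (T3) for any two distinct trees $(\mathcal V,E,r),(\mathcal V',E',r')\in\mathbb T$, the sets $\mathcal V\setminus\{r\}$ and $\mathcal V'\setminus\{r'\}$ are disjoint.
   Context: $\mathcal C^*$ is the set of client representatives: given finite sets $\mathcal F,\mathcal C$, a metric $d$ on $\mathcal F\cup\mathcal C$, reals $x_{i,j}\ge0$ with $\sum_ix_{i,j}=1$, $d_{av}(j)=\sum_ix_{i,j}d(i,j)$, and a positive integer parameter $\ell_0$, start with $\mathcal C^*=\emptyset$, $R=\mathcal C$; while $R\ne\emptyset$, choose $v\in R$ with smallest $d_{av}(v)$, add it to $\mathcal C^*$, and remove from $R$ all $j$ with $d(j,v)\le2\ell_0d_{av}(j)$. A rooted tree $T=(\mathcal V,E,r)$ consists of a vertex set $\mathcal V\subseteq\mathcal C^*$, an edge set $E$ forming a tree on $\mathcal V$, and a root $r\in\mathcal V$. For $v\in\mathcal V$, $\Lambda_T(v)$ is the set of vertices of the subtree rooted at $v$, and for $v\ne r$, $\rho_T(v)$ is the parent of $v$. $T$ is a neighborhood tree if for every $v\in\mathcal V\setminus\{r\}$, $d(v,\mathcal C^*\setminus\Lambda_T(v))=d(v,\rho_T(v))$, where $d(v,\mathcal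 X)=\min_{w\in\mathcal X}d(v,w)$. *)

(* Defs.v *)
From HB Require Import structures.
From mathcomp Require Import all_boot all_order all_algebra.
Set Implicit Arguments. Unset Strict Implicit. Unset Printing Implicit Defensive.
Import Order.TTheory GRing.Theory Num.Theory.
Local Open Scope ring_scope.

Section Defs.
Variables (R : realFieldType) (T : finType).

Definition metric_on (S : {set T}) (d : T -> T -> R) : Prop :=
  (forall u v, u \in S -> v \in S -> 0 <= d u v) /\
  (forall u v, u \in S -> v \in S -> (d u v = 0 <-> u = v)) /\
  (forall u v, u \in S -> v \in S -> d u v = d v u) /\
  (forall u v w, u \in S -> v \in S -> w \in S -> d u w <= d u v + d v w).

Definition d_av (F : {set T}) (x d : T -> T -> R) (j : T) : R :=
  \sum_(i in F) x i j * d i j.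

(* greedy_reps F x d l0 Rm S : the greedy procedure started with remaining
   set Rm (and C* = empty) can output the set S (any tie-breaking). *)
Inductive greedy_reps (F : {set T}) (x d : T -> T -> R) (l0 : nat)
  : {set T} -> {set T} -> Prop :=
| greedy_done : greedy_reps F x d l0 set0 set0
| greedy_step (Rm S : {set T}) (v : T) :
    v \in Rm ->
    (forall u, u \in Rm -> d_av F x d v <= d_av F x d u) ->
    greedy_reps F x d l0
      (Rm :\: [set j in Rm | d j v <= 2%:R * l0%:R * d_av F x d j]) S ->
    greedy_reps F x d l0 Rm (v |: S).

(* A rooted tree (V, E, r): E is a set of 2-element subsets of V. *)
Definition rtree := ({set T} * {set {set T}} * T)%type.
Definition rt_V (t : rtree) : {set T} := t.1.1.
Definition rt_E (t : rtree) : {set {set T}} := t.1.2.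
Definition rt_r (t : rtree) : T := t.2.

Definition adj_in (E : {set {set T}}) (S : {set T}) : rel T :=
  [rel u w | [&& u \in S, w \in S & [set u; w] \in E]].

Definition is_tree_on (V : {set T}) (E : {set {set T}}) : Prop :=
  V != set0 /\
  (forall e, e \in E -> (#|e| == 2)%N && (e \subset V)) /\
  (forall u w, u \in V -> w \in V -> connect (adj_in E V) u w) /\
  #|E| = (#|V| - 1)%N.

Definition is_rooted_tree (Cs : {set T}) (t : rtree) : Prop :=
  rt_V t \subset Cs /\ is_tree_on (rt_V t) (rt_E t) /\ rt_r t \in rt_V t.

(* Lambda_T(v): vertices of the subtree rooted at v, i.e. the vertices w
   whose path to the root passes through v. *)
Definition subtree (t : rtree) (v : T) : {set T} :=
  if v == rt_r t then rt_V t
  else [set w in rt_V t | ~~ connect (adj_in (rt_E t) (rt_V t :\ v)) w (rt_r t)].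

Definition is_parent (t : rtree) (v p : T) : Prop :=
  [&& p \in rt_V t, [set v; p] \in rt_E t & p \notin subtree t v].

(* d(v, X) = d(v, p) with p in X, written out: p in X and d(v,p) <= d(v,w) for w in X *)
Definition dist_set_eq (d : T -> T -> R) (v : T) (X : {set T}) (a : R) : Prop :=
  (exists2 w, w \in X & d v w = a) /\ (forall w, w \in X -> a <= d v w).

Definition neighborhood_tree (Cs : {set T}) (d : T -> T -> R) (t : rtree) : Prop :=
  is_rooted_tree Cs t /\
  forall v, v \in rt_V t -> v != rt_r t ->
    exists p, is_parent t v p /\ dist_set_eq d v (Cs :\: subtree t v) (d v p).

End Defs.

(* Main.v *)
Require Import Defs.
From HB Require Import structures.
From mathcomp Require Import all_boot all_order all_algebra.
From mathcomp Require Import zify.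
Set Implicit Arguments. Unset Strict Implicit. Unset Printing Implicit Defensive.
Import Order.TTheory GRing.Theory Num.Theory.

Section Anc.
Variables (T : finType) (par : T -> T) (h : T -> nat).

Lemma fconP x y : reflect (exists n, iter n par x = y) (fconnect par x y).
Proof.
apply: (iffP idP) => [/iter_findex <-|[n <-]]; first by eexists.
exact: fconnect_iter.
Qed.

Lemma fcon_refl x : fconnect par x x.
Proof. exact: connect0. Qed.

Lemma fcon_par x : fconnect par x (par x).
Proof. exact: fconnect1. Qed.

Lemma fcon_trans x y z : fconnect par x y -> fconnect par y z -> fconnect par x z.
Proof. exact: connect_trans. Qed.

Lemma fcon_step x y : fconnect par x y -> x != y -> fconnect par (par x) y.
Proof.
move=> /fconP [[|n] <-]; first by rewrite eqxx.
by move=> _; apply/fconP; exists n; rewrite iterSr.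
Qed.

Hypothesis hdec : forall x, par x != x -> h (par x) < h x.

Lemma fcon_h x y : fconnect par x y -> h y <= h x.
Proof.
move=> /fconP [n <-]; elim: n => //= n IH.
case: (eqVneq (par (iter n par x)) (iter n par x)) => [->//|/hdec H].
by apply: leq_trans IH; apply: ltnW.
Qed.

Lemma iter_fix x n : par x = x -> iter n par x = x.
Proof. by move=> px; elim: n => //= n ->. Qed.

Lemma fcon_lt x y : fconnect par x y -> x != y -> h y < h x.
Proof.
move=> xy nxy; have px : par x != x.
  apply/negP => /eqP px; move: xy => /fconP [n]; rewrite iter_fix // => E.
  by rewrite E eqxx in nxy.
exact: leq_ltn_trans (fcon_h (fcon_step xy nxy)) (hdec px).
Qed.

Lemma fcon_antisym x y : fconnect par x y -> fconnect par y x -> x = y.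
Proof.
move=> xy yx; apply/eqP; apply/negPn/negP => nxy.
have := fcon_lt xy nxy; have := fcon_h yx; lia.
Qed.
End Anc.

Section Tree.
Variables (T : finType) (par : T -> T) (h : T -> nat) (V : {set T}) (r : T).
Hypothesis hdec : forall x, par x != x -> h (par x) < h x.
Hypothesis rV : r \in V.
Hypothesis parV : forall v, v \in V -> v != r -> par v \in V.
Hypothesis parN : forall v, v \in V -> v != r -> par v != v.

Definition edges : {set {set T}} := [set [set v; par v] | v in V :\ r].
Definition mktree : rtree T := (V, edges, r).

Lemma reach_r v : v \in V -> fconnect par v r.
Proof.
have: forall n v, h v < n -> v \in V -> fconnect par v r; last by apply; apply: ltnSn.
elim=> // n IH u hu uV.
case: (eqVneq u r) => [->|ur]; first exact: fcon_refl.
apply: fcon_trans (fcon_par par u) _; apply: IH (parV uV ur).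
by have := hdec (parN uV ur); lia.
Qed.

Lemma h_r v : v \in V -> v != r -> h r < h v.
Proof. by move=> vV vr; apply: (fcon_lt hdec (reach_r vV)). Qed.

Lemma edgeE (x y a b : T) : [set x; y] = [set a; b] -> (x = a /\ y = b) \/ (x = b /\ y = a).
Proof.
move=> E.
have: x \in [set a; b] by rewrite -E set21.
have: y \in [set a; b] by rewrite -E set22.
have: a \in [set x; y] by rewrite E set21.
have: b \in [set x; y] by rewrite E set22.
move=> /set2P [] E1 /set2P [] E2 /set2P [] E3 /set2P [] E4; subst; auto.
Qed.

Lemma conn_up (S : {set T}) : r \in S -> forall u, u \in V ->
  (forall x, x \in V -> fconnect par u x -> x \in S) ->
  connect (adj_in edges S) u r.
Proof.
move=> rS.
have: forall n u, h u < n -> u \in V ->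
  (forall x, x \in V -> fconnect par u x -> x \in S) ->
  connect (adj_in edges S) u r; last by move=> H u; apply: H; apply: ltnSn.
elim=> // n IH u hu uV HS.
case: (eqVneq u r) => [->|ur]; first exact: connect0.
have pV := parV uV ur; have pN := parN uV ur.
apply: connect_trans (connect1 _) (IH _ _ pV _).
- rewrite /adj_in /= (HS u uV (fcon_refl _ _)) (HS _ pV (fcon_par _ _)) /=.
  by apply/imsetP; exists u => //; rewrite in_setD1 ur.
- by have := hdec pN; lia.
- by move=> x xV px; apply: HS => //; apply: fcon_trans (fcon_par par u) px.
Qed.

Lemma adj_sym (S : {set T}) : symmetric (adj_in edges S).
Proof.
move=> x y; rewrite /adj_in /=; have -> : [set x; y] = [set y; x] by apply/setP => z; rewrite !inE orbC.
by case: (x \in S); case: (y \in S).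
Qed.

Lemma tree_ok : is_tree_on V edges.
Proof.
split; first by apply/set0Pn; exists r.
split.
  move=> e /imsetP [u]; rewrite in_setD1 => /andP [ur uV] ->.
  have H : u != par u by rewrite eq_sym (parN uV ur).
  rewrite cards2 H /=; apply/subsetP => x /set2P [] ->; auto.
split.
  move=> u w uV wV.
  apply: connect_trans (@conn_up V rV u uV (fun x xV _ => xV)) _.
  rewrite (sym_connect_sym (@adj_sym V)).
  apply: (@conn_up V rV w wV) => x xV _; exact: xV.
rewrite /edges card_in_imset.
  by rewrite (cardsD1 r V) rV add1n subn1.
move=> u w; rewrite !in_setD1 => /andP [ur uV] /andP [wr wV] /edgeE [[]//|[e1 e2]].
have := hdec (parN uV ur); have := hdec (parN wV wr).
by rewrite -e1 -e2; lia.
Qed.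

Lemma sub_in v w : v \in V -> v != r -> w \in V -> fconnect par w v ->
  w \in subtree mktree v.
Proof.
move=> vV vr wV wv; rewrite /subtree /= (negbTE vr) inE wV /=.
apply/negP => C.
have cl : closed (adj_in edges (V :\ v)) [pred x | fconnect par x v].
  move=> x y /and3P [xS yS /imsetP [u uVr /edgeE E]].
  move: xS yS; rewrite !in_setD1 /= => /andP [xv _] /andP [yv _].
  case: E => [[? ?]|[? ?]]; subst x y.
  - apply/idP/idP => [H|H]; first exact: fcon_step H xv.
    exact: fcon_trans (fcon_par par u) H.
  - apply/idP/idP => [H|H]; last exact: fcon_step H yv.
    exact: fcon_trans (fcon_par par u) H.
have := closed_connect cl C; rewrite !inE /= wv => /esym rv.
by have := fcon_h hdec rv; have := h_r vV vr; lia.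
Qed.

Lemma par_notin v : v \in V -> v != r -> par v \notin subtree mktree v.
Proof.
move=> vV vr; rewrite /subtree /= (negbTE vr) inE negb_and negbK; apply/orP; right.
apply: conn_up; first by rewrite in_setD1 eq_sym vr rV.
  exact: parV.
move=> x xV px; rewrite in_setD1 xV andbT; apply/negP => /eqP xv.
have := fcon_h hdec px; have := hdec (parN vV vr); rewrite xv; lia.
Qed.

Lemma is_parent_ok v : v \in V -> v != r -> is_parent mktree v (par v).
Proof.
move=> vV vr; rewrite /is_parent /= parV //= par_notin // andbT.
by apply/imsetP; exists v => //; rewrite in_setD1 vr.
Qed.

End Tree.

Section Final.
Variables (R : realFieldType) (T : finType) (Cs : {set T}) (d : T -> T -> R).
Variables (par blk : T -> T) (h : T -> nat).
Hypothesis hdec : forall x, par x != x -> h (par x) < h x.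
Hypothesis nn : forall v y, v \in Cs -> par v != v -> y \in Cs ->
  (d v y < d v (par v))%R -> blk y = blk v /\ fconnect par y v.

Definition good_piece (z : T) (V : {set T}) : Prop :=
  [/\ z \in V, V \subset Cs,
      forall v, v \in V -> v != z -> par v \in V /\ par v != v &
      forall v w, v \in V -> v != z -> w \in Cs -> blk w = blk v ->
        fconnect par w v -> w \in V].

Lemma piece_nt z V : good_piece z V -> neighborhood_tree Cs d (mktree par V z).
Proof.
case=> zV VCs Hp Hc.
have parV : forall v, v \in V -> v != z -> par v \in V by move=> v vV vz; case: (Hp v vV vz).
have parN : forall v, v \in V -> v != z -> par v != v by move=> v vV vz; case: (Hp v vV vz).
split.
  split; first exact: VCs.
  by split; [exact: (tree_ok hdec zV parV parN) | exact: zV].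
move=> v /= vV vz; exists (par v); split; first exact: (is_parent_ok hdec zV parV parN).
split.
  exists (par v) => //; rewrite in_setD (par_notin hdec zV parV parN) //=.
  by apply: (subsetP VCs); apply: parV.
move=> w; rewrite in_setD => /andP [wsub wCs].
rewrite leNgt; apply/negP => lt.
have vCs : v \in Cs by apply: (subsetP VCs).
case: (nn vCs (parN v vV vz) wCs lt) => bw fw.
have wV := Hc v w vV vz wCs bw fw.
by move: wsub; rewrite (sub_in hdec zV parV parN vV vz wV fw).
Qed.

Lemma assemble (l : nat) (Pcs : {set (T * {set T})}) :
  (forall p, p \in Pcs -> good_piece p.1 p.2 /\ (l <= #|p.2| <= l ^ 2)%N) ->
  (forall x, x \in Cs -> exists2 p, p \in Pcs & x \in p.2) ->
  (forall p p', p \in Pcs -> p' \in Pcs -> p != p' ->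
     [disjoint (p.2 :\ p.1) & (p'.2 :\ p'.1)]) ->
  exists TT : {set rtree T},
    (forall t, t \in TT -> neighborhood_tree Cs d t) /\
    (forall t, t \in TT -> (l <= #|rt_V t| <= l ^ 2)%N) /\
    \bigcup_(t in TT) rt_V t = Cs /\
    (forall t t', t \in TT -> t' \in TT -> t != t' ->
       [disjoint (rt_V t :\ rt_r t) & (rt_V t' :\ rt_r t')]).
Proof.
move=> Hg Hcov Hdis.
exists [set mktree par p.2 p.1 | p in Pcs].
split.
  by move=> t /imsetP [p pP ->]; apply: piece_nt; case: (Hg p pP).
split.
  by move=> t /imsetP [p pP ->]; case: (Hg p pP).
split.
  apply/setP => x; apply/bigcupP/idP.
    case=> t /imsetP [p pP ->] /=; case: (Hg p pP) => [[_ sub _ _] _].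
    exact: (subsetP sub).
  move=> /Hcov [p pP xp]; exists (mktree par p.2 p.1) => //.
  by apply/imsetP; exists p.
move=> t t' /imsetP [p pP ->] /imsetP [p' pP' ->] ne /=.
apply: Hdis => //; apply: contraNneq ne => ->; done.
Qed.
End Final.

Lemma eq_sym_ne (T : eqType) (x y : T) : x != y -> y != x.
Proof. by rewrite eq_sym. Qed.

Section Cards.
Variables (I T : finType).

Lemma card_bigcup_le (G : {set I}) (F : I -> {set T}) :
  #|\bigcup_(i in G) F i| <= \sum_(i in G) #|F i|.
Proof.
elim/big_rec2: _ => [|i n U _ le]; first by rewrite cards0.
by rewrite (leq_trans (leq_card_setU (F i) U).1) ?leq_add2l.
Qed.

Lemma card_bigcup_eq (G : {set I}) (F : I -> {set T}) :
  (forall i j, i \in G -> j \in G -> i != j -> [disjoint F i & F j]) ->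
  #|\bigcup_(i in G) F i| = \sum_(i in G) #|F i|.
Proof.
move: {2}#|G| (erefl #|G|) => n; elim: n G => [|n IH] G cG dis.
  by move: cG => /eqP; rewrite cards_eq0 => /eqP ->; rewrite big_set0 big_set0 cards0.
have : G != set0 by rewrite -card_gt0 cG.
case/set0Pn => i iG.
rewrite (big_setD1 i iG) (big_setD1 i iG) /=.
rewrite -IH; first last.
- by move=> j k /setD1P [_ jG] /setD1P [_ kG]; apply: dis.
- by move: cG; rewrite (cardsD1 i G) iG add1n => -[].
apply/eqP; rewrite (leq_card_setU (F i) _).2.
rewrite -setI_eq0; apply/eqP/setP => x; rewrite !inE.
apply/negP => /andP [xi /bigcupP [j /setD1P [ji jG] xj]].
by have := dis i j iG jG (eq_sym_ne ji); rewrite -setI_eq0 => /eqP/setP/(_ x); rewrite !inE xi xj.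
Qed.
End Cards.

Section Part.
Variables (T : finType) (c : T -> nat) (L M : nat).
Hypothesis L1 : 0 < L.

Lemma part_one (A : {set T}) : (forall a, a \in A -> c a <= M) ->
  L <= \sum_(a in A) c a ->
  exists2 G : {set T}, G \subset A & L <= \sum_(a in G) c a <= L - 1 + M.
Proof.
move: {2}#|A| (erefl #|A|) => n; elim: n A => [|n IH] A cA cM sA.
  move: cA => /eqP; rewrite cards_eq0 => /eqP E; subst A.
  by move: sA; rewrite big_set0; lia.
case: (leqP (\sum_(a in A) c a) (L - 1 + M)) => hs.
  by exists A => //; rewrite sA hs.
have : A != set0 by rewrite -card_gt0 cA.
case/set0Pn => a aA.
have [G GA HG] : exists2 G : {set T}, G \subset A :\ a & L <= \sum_(a in G) c a <= L - 1 + M.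
  apply: IH.
  - by move: cA; rewrite (cardsD1 a A) aA add1n => -[].
  - by move=> b /setD1P [_ bA]; apply: cM.
  - move: hs; rewrite (big_setD1 a aA) /=; have := cM a aA; lia.
by exists G => //; apply: subset_trans GA (subD1set _ _).
Qed.

Lemma part_all (A : {set T}) : (forall a, a \in A -> c a <= M) ->
  L <= \sum_(a in A) c a ->
  exists P : {set {set T}},
    [/\ forall G, G \in P -> G \subset A /\ L <= \sum_(a in G) c a <= M + 2 * L - 2,
        forall a, a \in A -> exists2 G, G \in P & a \in G &
        forall G G', G \in P -> G' \in P -> G != G' -> [disjoint G & G']].
Proof.
move: (ltnSn #|A|); move: {2}(#|A|.+1) => n; elim: n A => [//|n IH] A cA cM sA.
case: (leqP (\sum_(a in A) c a) (M + 2 * L - 2)) => hs.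
  exists [set A]; split.
  - by move=> G /set1P ->; rewrite sA hs.
  - by move=> a aA; exists A; rewrite ?set11.
  - by move=> G G' /set1P -> /set1P ->; rewrite eqxx.
have [G GA HG] := part_one cM sA.
have GA' : A :&: G = G by apply/setIidPr.
have sD : \sum_(a in A) c a = \sum_(a in G) c a + \sum_(a in A :\: G) c a.
  by rewrite (big_setID G) /= GA'.
have G0 : G != set0.
  apply/negP => /eqP E; move: HG; rewrite E big_set0; lia.
have [P [P1 P2 P3]] : exists P : {set {set T}},
    [/\ forall H, H \in P -> H \subset A :\: G /\ L <= \sum_(a in H) c a <= M + 2 * L - 2,
        forall a, a \in A :\: G -> exists2 H, H \in P & a \in H &
        forall H H', H \in P -> H' \in P -> H != H' -> [disjoint H & H']].
  apply: IH.
  - have := cardsD A G; rewrite (setIidPr GA) => ->.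
    have := card_gt0 G; rewrite G0 => /= ?; have := subset_leq_card GA; lia.
  - by move=> b /setDP [bA _]; apply: cM.
  - by move: hs; rewrite sD; lia.
exists (G |: P); split.
- move=> G' /setU1P [->|G'P].
    by rewrite GA /=; lia.
  case: (P1 G' G'P) => sub ->; split => //.
  by apply: subset_trans sub (subsetDl _ _).
- move=> a aA; case: (boolP (a \in G)) => aG.
    by exists G; rewrite ?setU11.
  have : a \in A :\: G by rewrite inE aG aA.
  by case/P2 => G' G'P aG'; exists G'; rewrite // setU1r.
- have disG : forall G', G' \in P -> [disjoint G & G'].
    move=> G' /P1 [sub _]; apply: disjointWr sub _.
    by rewrite disjoints_subset; apply/subsetP => x xG; rewrite !inE xG.
  move=> G1 G2 /setU1P [->|G1P] /setU1P [->|G2P] ne.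
  + by rewrite eqxx in ne.
  + exact: disG.
  + by rewrite disjoint_sym; apply: disG.
  + exact: P3.
Qed.
End Part.

Section Split.
Variables (T : finType) (Cs : {set T}) (par blk : T -> T) (h : T -> nat) (l : nat).
Hypothesis l2 : 1 < l.
Hypothesis hdec : forall x, par x != x -> h (par x) < h x.
Hypothesis parCs : forall v, v \in Cs -> par v \in Cs.
Hypothesis blk_anc : forall v, v \in Cs -> fconnect par v (blk v).
Hypothesis blk_par : forall v, v \in Cs -> v != blk v -> blk (par v) = blk v.
Hypothesis blk_root : forall v, v \in Cs -> par v = v -> blk v = v.
Hypothesis blk_nonroot : forall v, v \in Cs -> par v != v -> par (blk v) != blk v.
Hypothesis blk_size : forall b, #|[set w in Cs | blk w == b]| <= l - 1.

Definition block a := [set w in Cs | blk w == a].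
Definition desc (S : {set T}) a := [set u in S | fconnect par u a].
Definition tops (S : {set T}) z :=
  [set a in S | (blk a == a) && (par a == z) && (par a != a)].
Definition HH (S : {set T}) z := \bigcup_(a in tops S z) desc S a.

Definition Inv (S : {set T}) (Pcs : {set (T * {set T})}) : Prop :=
 [/\ S \subset Cs,
  (forall v, v \in S -> par v \in S),
  (forall v w, v \in S -> w \in Cs -> blk w = blk v -> w \in S),
  (forall k, k \in S -> par k = k -> exists a,
     [/\ a \in S, par a = k, a != k, blk a = a & l - 1 <= #|block a|]) &
  (forall x, x \in Cs -> x \in S \/ exists2 p, p \in Pcs & x \in p.2)] /\
 [/\ (forall p, p \in Pcs -> good_piece Cs par blk p.1 p.2 /\ (l <= #|p.2| <= l ^ 2)),
  (forall p p', p \in Pcs -> p' \in Pcs -> p != p' ->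
     [disjoint (p.2 :\ p.1) & (p'.2 :\ p'.1)]) &
  (forall p, p \in Pcs -> [disjoint (p.2 :\ p.1) & S])].

Lemma iter_root k n : par k = k -> iter n par k = k.
Proof. by move=> pk; elim: n => //= n ->. Qed.

Lemma fcon_root k x : par k = k -> fconnect par k x -> x = k.
Proof. by move=> pk /fconP [n <-]; rewrite iter_root. Qed.

Lemma fcon_cmp u a b : fconnect par u a -> fconnect par u b ->
  fconnect par a b \/ fconnect par b a.
Proof.
move=> /fconP [n <-] /fconP [m <-].
case: (leqP n m) => nm.
  left; apply/fconP; exists (m - n); rewrite -iterD subnK //.
right; apply/fconP; exists (n - m); rewrite -iterD subnK //; exact: ltnW.
Qed.

Lemma blk_desc w a : w \in Cs -> blk a = a -> fconnect par w a -> fconnect par (blk w) a.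
Proof.
move=> wCs ba /fconP [n]; elim: n w wCs => [|n IH] w wCs /=.
  by move=> E; subst a; rewrite ba; apply: fcon_refl.
rewrite -iterS iterSr => E.
case: (eqVneq w (blk w)) => [<-|nw].
  by apply/fconP; exists n.+1; rewrite iterSr.
rewrite -(blk_par wCs nw); apply: IH (parCs wCs) _.
by rewrite -E.
Qed.

Lemma root_ex (S : {set T}) : S \subset Cs -> (forall v, v \in S -> par v \in S) ->
  forall x, x \in S -> exists2 k, k \in S & par k = k.
Proof.
move=> SCs Sp x; move: (ltnSn (h x)); move: {2}(h x).+1 => n.
elim: n x => [//|n IH] x hx xS.
case: (eqVneq (par x) x) => [px|px]; first by exists x.
apply: (IH (par x)) (Sp _ xS); have := hdec px; lia.
Qed.

Lemma tops_h (S : {set T}) z a : a \in tops S z -> h z < h a.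
Proof.
rewrite inE => /andP [_ /andP [/andP [_ /eqP <-] pa]]; exact: hdec.
Qed.

Lemma desc_h (S : {set T}) z a u : a \in tops S z -> u \in desc S a -> h z < h u.
Proof.
move=> at_ /setIdP [_ ua].
exact: leq_trans (tops_h at_) (fcon_h hdec ua).
Qed.

Lemma desc_disj (S : {set T}) z a b : a \in tops S z -> b \in tops S z -> a != b ->
  [disjoint desc S a & desc S b].
Proof.
move=> at_ bt ab; rewrite -setI_eq0; apply/eqP/setP => u; rewrite !inE.
apply/negP => /andP [/andP [_ ua] /andP [_ ub]].
move: at_ bt; rewrite !inE => /andP [_ /andP [/andP [_ /eqP pa] na]]
  /andP [_ /andP [/andP [_ /eqP pb] nb]].
have ha := hdec na; have hb := hdec nb.
case: (fcon_cmp ua ub) => [E|E].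
- have := fcon_h hdec (fcon_step E ab); rewrite pa -pb; lia.
- have := fcon_h hdec (fcon_step E (eq_sym_ne ab)); rewrite pb -pa; lia.
Qed.

Lemma topsP (S : {set T}) z a : a \in tops S z -> [/\ a \in S, blk a = a, par a = z & par a != a].
Proof. by rewrite inE => /andP [aS /andP [/andP [/eqP ba /eqP pa] na]]. Qed.

Section Step.
Variables (S : {set T}) (z : T).
Hypothesis SCs : S \subset Cs.
Hypothesis Spar : forall v, v \in S -> par v \in S.
Hypothesis Sblk : forall v w, v \in S -> w \in Cs -> blk w = blk v -> w \in S.
Hypothesis zS : z \in S.
Hypothesis zmax : forall y, y \in S -> l - 1 <= #|HH S y| -> h y <= h z.


Lemma decomp a u : a \in S -> blk a = a -> u \in desc S a ->
  blk u = a \/ exists2 w, blk w = a & u \in HH S w.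
Proof.
move=> aS ba /setIdP [uS /fconP [n E]].
elim: n u uS E => [|n IH] u uS /= E; first by left; rewrite E.
move: E; rewrite -iterS iterSr => E.
case: (IH (par u) (Spar uS) E) => [bp|[w bw pw]].
  case: (eqVneq (blk u) a) => [|bu]; first by left.
  have ub : u = blk u.
    apply/eqP; apply/negPn/negP => nb.
    by rewrite (blk_par (subsetP SCs _ uS) nb) in bp; rewrite bp eqxx in bu.
  have pu : par u != u.
    apply/negP => /eqP pu; move: bp; rewrite pu => bp.
    by rewrite bp eqxx in bu.
  right; exists (par u) => //.
  apply/bigcupP; exists u.
    by rewrite inE uS -ub !eqxx pu.
  by rewrite inE uS fcon_refl.
right; exists w => //.
move: pw => /bigcupP [b bt /setIdP [_ pb]].
apply/bigcupP; exists b => //.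
by rewrite inE uS (fcon_trans (fcon_par par u) pb).
Qed.

Lemma desc_bound a : a \in tops S z -> #|desc S a| <= (l - 1) ^ 2.
Proof.
move=> at_; have [aS ba pa na] := topsP at_.
have sub : desc S a \subset block a :|: \bigcup_(w in block a) HH S w.
  apply/subsetP => u ud; have uCs : u \in Cs by move: ud => /setIdP [uS _]; apply: (subsetP SCs).
  case: (decomp aS ba ud) => [bu|[w bw uw]].
    by rewrite inE; apply/orP; left; rewrite inE uCs bu eqxx.
  rewrite inE; apply/orP; right; apply/bigcupP; exists w => //.
  rewrite inE bw eqxx andbT.
  move: uw => /bigcupP [b bt /setIdP [_ _]].
  by have [bS _ <- _] := topsP bt; apply: parCs; apply: (subsetP SCs).
have small : forall w, w \in block a -> #|HH S w| <= l - 2.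
  move=> w; rewrite inE => /andP [wCs /eqP bw].
  have wS : w \in S by apply: (Sblk aS wCs); rewrite ba.
  have hw : h z < h w.
    have := tops_h at_; have := fcon_h hdec (blk_anc wCs); rewrite bw; lia.
  case: (leqP (l - 1) #|HH S w|) => [big|]; last by lia.
  by have := zmax wS big; lia.
have b1 : #|block a| <= l - 1 by apply: blk_size.
have s1 := subset_leq_card sub.
have [s2 _] := leq_card_setU (block a) (\bigcup_(w in block a) HH S w).
have s3 := card_bigcup_le (block a) (HH S).
have s4 : \sum_(w in block a) #|HH S w| <= \sum_(w in block a) (l - 2) by apply: leq_sum.
rewrite sum_nat_const in s4.
have s5 : #|block a| * (l - 2) <= (l - 1) * (l - 2) by apply: leq_mul.
move: s1 s2 s3 s4 s5 b1; set b := #|block a|; set U := #|_ :|: _|.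
set X := #|\bigcup_(w in _) _|; set Y := \sum_(w in _) _.
rewrite expnS expn1; nia.
Qed.

Lemma HH_card : #|HH S z| = \sum_(a in tops S z) #|desc S a|.
Proof. apply: card_bigcup_eq => a b at_ bt ne. exact: (desc_disj at_ bt ne). Qed.

Definition piece (G : {set T}) := (z, z |: \bigcup_(a in G) desc S a).

Lemma z_notin (G : {set T}) : G \subset tops S z -> z \notin \bigcup_(a in G) desc S a.
Proof.
move=> GA; apply/negP => /bigcupP [a aG za].
by have := desc_h (subsetP GA _ aG) za; rewrite ltnn.
Qed.

Lemma piece_card (G : {set T}) : G \subset tops S z ->
  #|(piece G).2| = (\sum_(a in G) #|desc S a|).+1.
Proof.
move=> GA; rewrite /= cardsU1 z_notin // add1n card_bigcup_eq //.
by move=> a b aG bG; apply: desc_disj; apply: (subsetP GA).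
Qed.

Lemma piece_good (G : {set T}) : G \subset tops S z ->
  good_piece Cs par blk (piece G).1 (piece G).2.
Proof.
move=> GA; split => /=.
- exact: setU11.
- apply/subsetP => x /setU1P [->|/bigcupP [a _ /setIdP [xS _]]]; apply: (subsetP SCs) => //.
- move=> v /setU1P [->|]; first by rewrite eqxx.
  move=> /bigcupP [a aG /setIdP [vS va]] _.
  have [aS ba pa na] := topsP (subsetP GA _ aG).
  case: (eqVneq v a) => [->|nva].
    by rewrite pa setU11 -pa.
  split.
    apply/setU1P; right; apply/bigcupP; exists a => //.
    by rewrite inE (Spar vS) (fcon_step va nva).
  apply/negP => /eqP pv; have := fcon_root pv va => E.
  by rewrite E eqxx in nva.
- move=> v w /setU1P [->|]; first by rewrite eqxx.
  move=> /bigcupP [a aG /setIdP [vS va]] _ wCs bw wv.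
  apply/setU1P; right; apply/bigcupP; exists a => //.
  by rewrite inE (Sblk vS wCs bw) (fcon_trans wv va).
Qed.

End Step.

Lemma step (S : {set T}) (Pcs : {set (T * {set T})}) : Inv S Pcs -> S != set0 ->
  exists S' Pcs', Inv S' Pcs' /\ #|S'| < #|S|.
Proof.
case=> [[SCs Spar Sblk Sroot Scov] [Pgood Pdis PS]] Sne.
case/set0Pn: Sne => x xS.
have [k kS kr] := root_ex SCs Spar xS.
set C := [set y in S | l - 1 <= #|HH S y|].
have kC : k \in C.
  have [a [aS pa ak ba sz]] := Sroot k kS kr.
  rewrite inE kS /=; apply: leq_trans sz _; apply: subset_leq_card.
  apply/subsetP => w; rewrite inE => /andP [wCs /eqP bw].
  apply/bigcupP; exists a.
    by rewrite inE aS ba pa !eqxx /= eq_sym.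
  rewrite inE (Sblk _ _ aS wCs); last by rewrite bw ba.
  by rewrite -bw blk_anc.
have [z zC zmax] : exists2 z, z \in C & forall y, y \in C -> h y <= h z.
  by exists [arg max_(y > k in C) h y]; case: arg_maxnP.
move: zC; rewrite inE => /andP [zS zbig].
have zmax' : forall y, y \in S -> l - 1 <= #|HH S y| -> h y <= h z.
  by move=> y yS yb; apply: zmax; rewrite inE yS.
have L1 : 0 < l - 1 by lia.
have cM : forall a, a \in tops S z -> #|desc S a| <= (l - 1) ^ 2.
  by move=> a; apply: desc_bound.
have sA : l - 1 <= \sum_(a in tops S z) #|desc S a| by rewrite -HH_card.
have [P [P1 P2 P3]] := @part_all _ (fun a => #|desc S a|) (l - 1) ((l - 1) ^ 2) L1 _ cM sA.
set HZ := HH S z.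
set S' := [set y in S | (y \notin HZ) && ~~ ((y == z) && (par z == z))].
set NP := [set piece S z G | G in P].
have inHZ : forall u, u \in HZ -> exists2 a, a \in tops S z & u \in desc S a.
  by move=> u /bigcupP [a at_ ua]; exists a.
have HZS : HZ \subset S.
  by apply/subsetP => u /inHZ [a _ /setIdP [uS _]].
have S'S : S' \subset S by apply/subsetP => u; rewrite inE => /andP [].
have nonroot_new : forall p, p \in NP -> p.2 :\ p.1 \subset HZ.
  move=> p /imsetP [G GP ->] /=; apply/subsetP => u /setD1P [uz /setU1P [E|]].
    by rewrite E eqxx in uz.
  move=> /bigcupP [a aG ua]; apply/bigcupP; exists a => //.
  by case: (P1 G GP) => /subsetP GA _; apply: GA.
exists S', (Pcs :|: NP); split; last first.
  have [u uHZ] : exists u, u \in HZ.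
    apply/set0Pn; rewrite -card_gt0; exact: leq_trans L1 zbig.
  rewrite (cardsD1 u S) (subsetP HZS _ uHZ) add1n ltnS.
  apply: subset_leq_card; apply/subsetP => y; rewrite !inE => /andP [yS /andP [yH _]].
  rewrite yS andbT; apply: contraNneq yH => ->; exact: uHZ.
split; split.
- exact: subset_trans S'S SCs.
- move=> v; rewrite inE => /andP [vS /andP [vH vz]].
  rewrite inE (Spar _ vS) /=; apply/andP; split.
    apply: contra vH => /inHZ [a at_ /setIdP [_ pa]]; apply/bigcupP; exists a => //.
    by rewrite inE vS (fcon_trans (fcon_par par v) pa).
  apply/negP => /andP [/eqP pvz /eqP pzz].
  have vnz : v != z by apply: contra vz => /eqP ->; rewrite eqxx pzz eqxx.
  have pvv : par v != v by rewrite pvz eq_sym.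
  have vCs : v \in Cs by apply: (subsetP SCs).
  case: (eqVneq v (blk v)) => [vb|nvb].
    move: vH; apply/negP; rewrite negbK; apply/bigcupP; exists v.
      by rewrite inE vS -vb pvz !eqxx /= eq_sym.
    by rewrite inE vS fcon_refl.
  have := blk_par vCs nvb; rewrite pvz (blk_root (subsetP SCs _ zS) pzz) => bz.
  by have := blk_nonroot vCs pvv; rewrite -bz pzz eqxx.
- move=> v w; rewrite inE => /andP [vS /andP [vH vz]] wCs bw.
  have wS := Sblk _ _ vS wCs bw.
  rewrite inE wS /=; apply/andP; split.
    apply/negP => /inHZ [a at_ /setIdP [_ wa]].
    have [_ ba _ _] := topsP at_.
    have := blk_desc wCs ba wa; rewrite bw => bva.
    move: vH; apply/negP; rewrite negbK; apply/bigcupP; exists a => //.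
    by rewrite inE vS (fcon_trans (blk_anc (subsetP SCs _ vS)) bva).
  apply/negP => /andP [/eqP wz /eqP pzz].
  have vCs : v \in Cs by apply: (subsetP SCs).
  move: bw; rewrite wz (blk_root (subsetP SCs _ zS) pzz) => bz.
  case: (eqVneq (par v) v) => [pv|pv].
    move: vz; rewrite -(blk_root vCs pv) -bz pzz !eqxx //.
  by have := blk_nonroot vCs pv; rewrite -bz pzz eqxx.
- move=> k' ; rewrite inE => /andP [kS' /andP [kH kz]] pk.
  have [a [aS pa ak ba sz]] := Sroot k' kS' pk.
  exists a; split => //.
  rewrite inE aS /=; apply/andP; split.
    apply/negP => /inHZ [b bt /setIdP [_ ab]].
    have [_ _ pb nb] := topsP bt.
    case: (eqVneq a b) => [E|nab].
      have e : k' = z by rewrite -pa E pb.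
      by move: kz pk; rewrite e => kz pz; rewrite pz !eqxx in kz.
    have := fcon_step ab nab; rewrite pa => /(fcon_root pk) bk.
    by move: nb; rewrite bk pk eqxx.
  apply/negP => /andP [/eqP az /eqP pzz].
  by move: ak; rewrite -pa az pzz eqxx.
- move=> y yCs; case: (Scov y yCs) => [yS|[p pP yp]]; last first.
    by right; exists p => //; rewrite inE pP.
  case: (boolP (y \in S')) => yS'; first by left.
  right.
  have [a at_] : exists a, a \in tops S z.
    have : HZ != set0 by rewrite -card_gt0; exact: leq_trans L1 zbig.
    by case/set0Pn => u /inHZ [a at_ _]; exists a.
  have [G GP aG] := P2 a at_.
  case: (boolP (y \in HZ)) => yH.
    have [b bt yb] := inHZ y yH.
    have [G' G'P bG'] := P2 b bt.
    exists (piece S z G'); first by rewrite inE; apply/orP; right; apply: imset_f.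
    by apply/setU1P; right; apply/bigcupP; exists b.
  have yz : y = z.
    move: yS'; rewrite inE yS yH /=; case: (eqVneq y z) => //.
  exists (piece S z G); first by rewrite inE; apply/orP; right; apply: imset_f.
  by rewrite yz /= setU11.
- move=> p /setUP [pP|/imsetP [G GP ->]]; first exact: Pgood.
  have [GA /andP [lo hi]] := P1 G GP.
  split; first exact: piece_good.
  rewrite piece_card // expnS expn1.
  move: lo hi; rewrite expnS expn1.
  have : 1 <= l by lia.
  nia.
- have oldnew : forall p p', p \in Pcs -> p' \in NP -> [disjoint (p.2 :\ p.1) & (p'.2 :\ p'.1)].
    move=> p p' pP p'N; rewrite disjoint_sym.
    apply: disjointWl (subset_trans (nonroot_new _ p'N) HZS) _.
    by rewrite disjoint_sym; apply: PS.
  move=> p p' /setUP [pP|pN] /setUP [p'P|p'N] ne.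
  + exact: Pdis.
  + exact: oldnew.
  + by rewrite disjoint_sym; apply: oldnew.
  + move: pN p'N ne => /imsetP [G GP ->] /imsetP [G' G'P ->] ne.
    have nG : G != G' by apply: contraNneq ne => ->.
    have dG := P3 G G' GP G'P nG.
    have [GA _] := P1 G GP; have [G'A _] := P1 G' G'P.
    have sub : forall G, G \in P -> (piece S z G).2 :\ (piece S z G).1 \subset \bigcup_(a in G) desc S a.
      move=> H HP; apply/subsetP => u /setD1P [uz /setU1P [E|//]].
      by rewrite E eqxx in uz.
    apply: disjointW (sub G GP) (sub G' G'P) _.
    rewrite -setI_eq0; apply/eqP/setP => u; rewrite inE [u \in set0]inE.
    apply/negP => /andP [/bigcupP [a aG ua] /bigcupP [b bG ub]].
    have nab : a != b.
      by apply: contraTneq aG => ->; rewrite (disjointFl dG bG).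
    have := desc_disj (subsetP GA _ aG) (subsetP G'A _ bG) nab.
    by rewrite -setI_eq0 => /eqP/setP/(_ u); rewrite !inE; case/setIdP: ua => -> ->; case/setIdP: ub => _ ->.
- move=> p /setUP [pP|pN].
    by apply: disjointWr S'S _; apply: PS.
  apply: disjointWl (nonroot_new _ pN) _.
  rewrite -setI_eq0; apply/eqP/setP => u; rewrite !inE.
  by apply/negP => /andP [uH /andP [_ /andP [nuH _]]]; rewrite uH in nuH.
Qed.

Hypothesis root_prim : forall k, k \in Cs -> par k = k -> exists a,
  [/\ a \in Cs, par a = k, a != k, blk a = a & l - 1 <= #|block a|].

Lemma split_ex : exists Pcs : {set (T * {set T})},
  [/\ forall p, p \in Pcs -> good_piece Cs par blk p.1 p.2 /\ (l <= #|p.2| <= l ^ 2),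
      forall x, x \in Cs -> exists2 p, p \in Pcs & x \in p.2 &
      forall p p', p \in Pcs -> p' \in Pcs -> p != p' ->
        [disjoint (p.2 :\ p.1) & (p'.2 :\ p'.1)]].
Proof.
have I0 : Inv Cs set0.
  split; split => //.
  all: try by move=> p; rewrite inE.
  all: try by move=> x xC; left.
  all: try by move=> v vC; apply: parCs.
  all: try by move=> k kC kr; have [a [? ? ? ? ?]] := root_prim kC kr; exists a.
have: forall n (S : {set T}) (Pcs : {set (T * {set T})}), #|S| < n -> Inv S Pcs -> exists Pcs', Inv set0 Pcs'.
  elim=> [//|n IH] S Pcs cS IS.
  case: (eqVneq S set0) => [E|ne]; first by exists Pcs; rewrite -E.
  have [S' [Pcs' [IS' c']]] := step IS ne.
  apply: (IH S' Pcs') => //; lia.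
move=> /(_ _ Cs set0 (ltnSn _) I0) [Pcs [[_ _ _ _ cov] [g dis _]]].
exists Pcs; split => //.
by move=> x /cov [|//]; rewrite inE.
Qed.

End Split.

Section Chain.
Variables (R : realFieldType) (T : finType) (Cs : {set T}) (d : T -> T -> R) (l : nat).
Hypothesis lCs : (l <= #|Cs|)%N.

Lemma exists_min (A : {set T}) (f : T -> R) : A != set0 ->
  exists2 w, w \in A & forall u, u \in A -> (f w <= f u)%R.
Proof.
move: (ltnSn #|A|); move: {2}(#|A|.+1) => n; elim: n A => [//|n IH] A cA.
case/set0Pn => a aA.
case: (eqVneq (A :\ a) set0) => [E|ne].
  exists a => // u uA; case: (eqVneq u a) => [->//|ua].
  have : u \in A :\ a by rewrite in_setD1 ua uA.
  by rewrite E inE.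
have cA' : #|A :\ a| < n by move: cA; rewrite (cardsD1 a A) aA add1n ltnS.
have [w wA wm] := IH (A :\ a) cA' ne.
  case: (leP (f a) (f w)) => [aw|wa].
    exists a => // u uA; case: (eqVneq u a) => [->//|ua].
    by apply: le_trans aw (wm u _); rewrite in_setD1 ua uA.
  exists w; first by move: wA; rewrite in_setD1 => /andP [].
  move=> u uA; case: (eqVneq u a) => [->|ua]; first exact: ltW.
  by apply: wm; rewrite in_setD1 ua uA.
Qed.

End Chain.

Section Chain2.
Variables (R : realFieldType) (T : finType) (Cs : {set T}) (d : T -> T -> R) (l : nat).
Hypothesis lCs : (l <= #|Cs|)%N.
Hypothesis l2 : (1 < l)%N.
Variables (Cov : {set T}) (y : T).
Hypothesis yCs : y \in Cs.
Hypothesis yCov : y \notin Cov.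

Definition NN (s : seq T) (z : T) := forall m, m < size s -> forall w, w \in Cs ->
  (d (nth z s m) w < d (nth z s m) (nth z s m.+1))%R -> exists2 j, j <= m & w = nth z s j.

Definition NNp (s : seq T) := forall m, m.+1 < size s -> forall w, w \in Cs ->
  (d (nth y s m) w < d (nth y s m) (nth y s m.+1))%R -> exists2 j, j <= m & w = nth y s j.

Definition Pre (s : seq T) := [/\ uniq s, 0 < size s, size s <= l - 1,
  (forall x, x \in s -> x \in Cs /\ x \notin Cov) & NNp s].

Lemma last_step (s : seq T) z w : 0 < size s -> uniq s ->
  (forall u, u \in Cs :\: [set x | x \in s] -> (d (last y s) z <= d (last y s) u)%R) ->
  w \in Cs -> (d (last y s) w < d (last y s) z)%R ->
  exists2 j, j < size s & w = nth y s j.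
Proof.
move=> s0 us zmin wCs lt.
have ws : w \in s.
  apply/negPn/negP => ns.
  have := zmin w; rewrite !inE ns wCs => /(_ isT) le.
  by move: (lt_le_trans lt le); rewrite ltxx.
by exists (index w s); rewrite ?index_mem ?nth_index.
Qed.

Lemma chain_ex : exists s z, [/\ uniq s, 0 < size s, size s <= l - 1,
  (forall x, x \in s -> x \in Cs /\ x \notin Cov) &
  [/\ z \in Cs, z \notin s, NN s z & (z \in Cov \/ size s = l - 1)]].
Proof.
have: forall k s, l - 1 - size s < k -> Pre s -> exists s z, [/\ uniq s, 0 < size s, size s <= l - 1,
  (forall x, x \in s -> x \in Cs /\ x \notin Cov) &
  [/\ z \in Cs, z \notin s, NN s z & (z \in Cov \/ size s = l - 1)]]; last first.
  move=> H; apply: (H _ [:: y]); first exact: ltnSn.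
  split.
  - by [].
  - by [].
  - by rewrite /=; lia.
  - by move=> x; rewrite inE => /eqP ->.
  - by move=> [|m].
elim=> [//|k IH] s ks [us s0 sl sU Np].
set A := Cs :\: [set x | x \in s].
have A0 : A != set0.
  apply/negP => /eqP A0.
  have : Cs \subset [set x | x \in s].
    apply/subsetP => x xC; apply/negPn/negP => nx.
    have : x \in A by rewrite in_setD nx xC.
    by rewrite A0 inE.
  move=> /subset_leq_card; rewrite cardsE (card_uniqP us); lia.
have [z zA zmin] := exists_min (d (last y s)) A0.
have [zCs zs] : z \in Cs /\ z \notin s by move: zA; rewrite !inE => /andP [-> ->].
have NNs : NN s z.
  move=> m ms w wCs.
  have e1 : nth z s m = nth y s m by apply: set_nth_default.
  rewrite e1.
  case: (ltnP m.+1 (size s)) => [ms1|ms1].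
    rewrite (set_nth_default y z ms1) => lt.
    have [j jm ->] := Np m ms1 w wCs lt.
    by exists j => //; apply: set_nth_default; lia.
  have em : m = (size s).-1 by lia.
  rewrite [nth z s m.+1]nth_default; last by lia.
  rewrite em nth_last => lt; have [j js ->] := last_step s0 us zmin wCs lt.
  by exists j; [lia | apply: set_nth_default].
case: (boolP ((z \in Cov) || (size s == l - 1))) => [H|H].
  exists s, z; split => //; split => //.
  by case/orP: H => [->|/eqP ->]; [left|right].
move: H; rewrite negb_or => /andP [zC sl'].
apply: (IH (rcons s z)).
  rewrite size_rcons; lia.
split.
- by rewrite rcons_uniq zs.
- by rewrite size_rcons.
- rewrite size_rcons; lia.
- by move=> x; rewrite mem_rcons inE => /orP [/eqP ->|/sU].
move=> m; rewrite size_rcons ltnS => ms w wCs.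
rewrite !nth_rcons.
case: (ltnP m (size s)) => [ms0|]; last by lia.
case: (ltnP m.+1 (size s)) => [ms1|ms1].
  move=> lt; have [j jm ->] := Np m ms1 w wCs lt.
  by exists j => //; rewrite nth_rcons ifT //; lia.
have em : m = (size s).-1 by lia.
have -> : m.+1 == size s by apply/eqP; lia.
rewrite em nth_last => lt.
have [j js ->] := last_step s0 us zmin wCs lt.
by exists j; [lia | rewrite nth_rcons js].
Qed.
End Chain2.

Definition BInv (R : realFieldType) (T : finType) (Cs : {set T}) (d : T -> T -> R) (l : nat)
  (Cov : {set T}) (par blk : T -> T) (h : T -> nat) : Prop :=
 [/\ Cov \subset Cs,
  (forall v, v \notin Cov -> par v = v /\ blk v = v),
  (forall v, v \in Cov -> par v \in Cov /\ blk v \in Cov),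
  (forall x, par x != x -> h (par x) < h x) &
  (forall v, v \in Cov -> fconnect par v (blk v))] /\
 [/\ (forall v, v \in Cov -> v != blk v -> blk (par v) = blk v),
  (forall v, v \in Cov -> par v = v -> blk v = v),
  (forall v, v \in Cov -> par v != v -> par (blk v) != blk v),
  (forall v y, v \in Cov -> par v != v -> y \in Cs ->
     (d v y < d v (par v))%R -> blk y = blk v /\ fconnect par y v) &
  ((forall b, #|[set w in Cs | blk w == b]| <= l - 1) /\
   (forall k, k \in Cov -> par k = k -> exists a,
     [/\ a \in Cov, par a = k, a != k, blk a = a & l - 1 <= #|[set w in Cs | blk w == a]|]))].

Section Ext.
Variables (R : realFieldType) (T : finType) (Cs : {set T}) (d : T -> T -> R) (l : nat).
Variables (Cov : {set T}) (par blk : T -> T) (h : T -> nat) (s : seq T) (z : T).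
Hypothesis CovCs : Cov \subset Cs.
Hypothesis unc : forall v, v \notin Cov -> par v = v /\ blk v = v.
Hypothesis pbCov : forall v, v \in Cov -> par v \in Cov /\ blk v \in Cov.
Hypothesis hdec : forall x, par x != x -> h (par x) < h x.
Hypothesis banc : forall v, v \in Cov -> fconnect par v (blk v).
Hypothesis bpar : forall v, v \in Cov -> v != blk v -> blk (par v) = blk v.
Hypothesis broot : forall v, v \in Cov -> par v = v -> blk v = v.
Hypothesis bnroot : forall v, v \in Cov -> par v != v -> par (blk v) != blk v.
Hypothesis nn : forall v y, v \in Cov -> par v != v -> y \in Cs ->
  (d v y < d v (par v))%R -> blk y = blk v /\ fconnect par y v.
Hypothesis bsize : forall b, #|[set w in Cs | blk w == b]| <= l - 1.
Hypothesis rprim : forall k, k \in Cov -> par k = k -> exists a,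
  [/\ a \in Cov, par a = k, a != k, blk a = a & l - 1 <= #|[set w in Cs | blk w == a]|].

Hypothesis us : uniq s.
Hypothesis s0 : 0 < size s.
Hypothesis sl : size s <= l - 1.
Hypothesis sU : forall x, x \in s -> x \in Cs /\ x \notin Cov.
Hypothesis zCs : z \in Cs.
Hypothesis zs : z \notin s.
Hypothesis NNs : NN Cs d s z.
Hypothesis zcase : z \in Cov \/ size s = l - 1.

Definition par' v := if v \in s then nth z s (index v s).+1 else par v.
Definition blk' v := if v \in s then last z s else blk v.
Definition h' v := if v \in s then h z + (size s - index v s) else h v.
Definition Cov' := Cov :|: [set x | (x \in s) || (x == z)].

Lemma sCov x : x \in s -> x \notin Cov. Proof. by case/sU. Qed.
Lemma Covs x : x \in Cov -> x \notin s.
Proof. by move=> xC; apply/negP => /sCov; rewrite xC. Qed.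

Lemma lst_s : last z s \in s.
Proof. by rewrite -nth_last mem_nth // prednK. Qed.

Lemma par'_nth i : i < size s -> par' (nth z s i) = nth z s i.+1.
Proof. by move=> ilt; rewrite /par' mem_nth // index_uniq. Qed.

Lemma nth_sz j : nth z s j \in s \/ nth z s j = z.
Proof.
case: (ltnP j (size s)) => jl; first by left; apply: mem_nth.
by right; apply: nth_default.
Qed.

Lemma iter_chain i k : i + k <= size s -> iter k par' (nth z s i) = nth z s (i + k).
Proof.
elim: k => [|k IH] ik; first by rewrite addn0.
by rewrite iterS IH ?par'_nth ?addnS //; lia.
Qed.

Lemma fcon_chain i j : i <= j -> j <= size s -> fconnect par' (nth z s i) (nth z s j).
Proof.
move=> ij js; apply/fconP; exists (j - i); rewrite iter_chain; last by lia.
by rewrite subnKC.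
Qed.

Lemma iter_old x n : x \in Cov -> iter n par' x = iter n par x.
Proof.
move=> xC; have : forall n, iter n par x \in Cov.
  by elim=> //= m IH; case: (pbCov IH).
move=> H; elim: n => //= n ->.
by rewrite /par' (negbTE (Covs (H n))).
Qed.

Lemma fcon_old x y : x \in Cov -> fconnect par x y -> fconnect par' x y.
Proof.
move=> xC /fconP [n <-]; apply/fconP; exists n; exact: iter_old.
Qed.

Lemma par'N v : v \in s -> par' v != v.
Proof.
move=> vs; have il : index v s < size s by rewrite index_mem.
rewrite -{1}(nth_index z vs) par'_nth //.
case: (ltnP (index v s).+1 (size s)) => [i1|i1].
  by rewrite -{2}(nth_index z vs) nth_uniq // eqn_leq ltnn.
rewrite nth_default //.
by apply/eqP => E; move: zs; rewrite E vs.
Qed.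

Lemma notin_s v : v \notin s -> [/\ par' v = par v, blk' v = blk v & h' v = h v].
Proof. by move=> vs; rewrite /par' /blk' /h' (negbTE vs). Qed.

Lemma cov'_cases v : v \in Cov' -> [\/ v \in s, v \in Cov | v = z /\ z \notin Cov].
Proof.
rewrite /Cov' !inE => /orP [vC|/orP [vs|/eqP ->]]; first by constructor 2.
  by constructor 1.
by case: (boolP (z \in Cov)) => zC; [constructor 2|constructor 3].
Qed.

Lemma E0 : Cov' \subset Cs.
Proof.
apply/subsetP => v; rewrite /Cov' !inE => /orP [vC|/orP [vs|/eqP ->//]].
  exact: (subsetP CovCs).
by case: (sU vs).
Qed.

Lemma E1 v : v \notin Cov' -> par' v = v /\ blk' v = v.
Proof.
rewrite /Cov' !inE negb_or negb_or => /andP [vC /andP [vs _]].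
by have [-> -> _] := notin_s vs; apply: unc.
Qed.

Lemma E2 v : v \in Cov' -> par' v \in Cov' /\ blk' v \in Cov'.
Proof.
have inS : forall x, x \in s -> x \in Cov' by move=> x xs; rewrite /Cov' !inE xs orbT.
have inC : forall x, x \in Cov -> x \in Cov' by move=> x xs; rewrite /Cov' !inE xs.
move=> /cov'_cases [vs|vC|[-> zC]].
- split; last by apply: inS; rewrite /blk' vs; apply: lst_s.
  rewrite /par' vs; case: (nth_sz (index v s).+1) => [H|->]; first exact: inS.
  by rewrite /Cov' !inE eqxx !orbT.
- have [-> -> _] := notin_s (Covs vC).
  by case: (pbCov vC) => ? ?; split; apply: inC.
- have [-> -> _] := notin_s zs; have [-> ->] := unc zC.
  by rewrite /Cov' !inE eqxx !orbT.
Qed.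

Lemma E3 x : par' x != x -> h' (par' x) < h' x.
Proof.
case: (boolP (x \in s)) => xs.
  have il : index x s < size s by rewrite index_mem.
  rewrite {1 2}/par' xs {2}/h' xs.
  case: (ltnP (index x s).+1 (size s)) => [i1|i1] _.
    have ns : nth z s (index x s).+1 \in s by apply: mem_nth.
    by rewrite /h' ns index_uniq //; lia.
  rewrite nth_default //; have [_ _ ->] := notin_s zs; lia.
have [-> _ ->] := notin_s xs => px.
have xC : x \in Cov by apply/negPn/negP => /unc [E _]; rewrite E eqxx in px.
have [pC _] := pbCov xC.
by have [_ _ ->] := notin_s (Covs pC); apply: hdec.
Qed.

Lemma E4 v : v \in Cov' -> fconnect par' v (blk' v).
Proof.
move=> /cov'_cases [vs|vC|[-> zC]].
- have il : index v s < size s by rewrite index_mem.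
  rewrite /blk' vs -{1}(nth_index z vs) -nth_last; apply: fcon_chain; lia.
- have [_ -> _] := notin_s (Covs vC); exact: fcon_old (banc vC).
- have [_ -> _] := notin_s zs; have [_ ->] := unc zC; exact: fcon_refl.
Qed.

Lemma E5 v : v \in Cov' -> v != blk' v -> blk' (par' v) = blk' v.
Proof.
move=> /cov'_cases [vs|vC|[-> zC]].
- rewrite {1}/blk' vs => nl.
  have il : index v s < size s by rewrite index_mem.
  have i1 : (index v s).+1 < size s.
    case: (ltnP (index v s).+1 (size s)) => // i1.
    have ie : index v s = (size s).-1 by lia.
    by move: nl; rewrite -{1}(nth_index z vs) ie nth_last eqxx.
  by rewrite /par' vs /blk' mem_nth // vs.
- have [-> -> _] := notin_s (Covs vC) => nb.
  have [pC _] := pbCov vC.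
  by have [_ -> _] := notin_s (Covs pC); apply: bpar.
- have [_ -> _] := notin_s zs; have [_ ->] := unc zC.
  by rewrite eqxx.
Qed.

Lemma E6 v : v \in Cov' -> par' v = v -> blk' v = v.
Proof.
move=> /cov'_cases [vs|vC|[-> zC]].
- by move=> E; have := par'N vs; rewrite E eqxx.
- by have [-> -> _] := notin_s (Covs vC); apply: broot.
- by have [_ -> _] := notin_s zs; have [_ ->] := unc zC.
Qed.

Lemma E7 v : v \in Cov' -> par' v != v -> par' (blk' v) != blk' v.
Proof.
move=> /cov'_cases [vs|vC|[-> zC]].
- move=> _; rewrite /blk' vs.
  rewrite -nth_last par'_nth; last by lia.
  rewrite prednK // nth_default // nth_last.
  by apply/eqP => E; move: zs; rewrite E lst_s.
- have [-> -> _] := notin_s (Covs vC) => pv.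
  have [_ bC] := pbCov vC.
  by have [-> _ _] := notin_s (Covs bC); apply: bnroot.
- by have [-> _ _] := notin_s zs; have [-> _] := unc zC; rewrite eqxx.
Qed.

Lemma E8 v y : v \in Cov' -> par' v != v -> y \in Cs ->
  (d v y < d v (par' v))%R -> blk' y = blk' v /\ fconnect par' y v.
Proof.
move=> /cov'_cases [vs|vC|[-> zC]].
- move=> _ yCs.
  have il : index v s < size s by rewrite index_mem.
  rewrite -{1 2 3}(nth_index z vs) par'_nth // => lt.
  have [j ji ye] := NNs il yCs lt.
  have ys : y \in s by rewrite ye mem_nth //; exact: leq_ltn_trans ji il.
  rewrite /blk' ys vs; split => //.
  by rewrite ye -(nth_index z vs); apply: fcon_chain => //; apply: ltnW.
- have [-> -> _] := notin_s (Covs vC) => pv yCs lt.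
  have [by_ fy] := nn vC pv yCs lt.
  have yC : y \in Cov.
    case: (boolP (y \in Cov)) => // yC.
    have [_ E] := unc yC; have [_ bC] := pbCov vC.
    by move: bC; rewrite -by_ E (negbTE yC).
  by have [_ -> _] := notin_s (Covs yC); split => //; apply: fcon_old.
- by have [-> _ _] := notin_s zs; have [-> _] := unc zC; rewrite eqxx.
Qed.

Lemma blk'_last : [set w in Cs | blk' w == last z s] = [set x | x \in s].
Proof.
apply/setP => w; rewrite !inE.
case: (boolP (w \in s)) => ws.
  by rewrite /blk' ws eqxx andbT; case: (sU ws).
have [_ -> _] := notin_s ws.
apply/negP => /andP [_ /eqP E].
case: (boolP (w \in Cov)) => wC.
  by have [_ bC] := pbCov wC; move: bC; rewrite E => /Covs; rewrite lst_s.
by have [_ E'] := unc wC; move: ws; rewrite -E' E lst_s.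
Qed.

Lemma card_s : #|[set x | x \in s]| = size s.
Proof. by rewrite cardsE; apply/card_uniqP. Qed.

Lemma E9 b : #|[set w in Cs | blk' w == b]| <= l - 1.
Proof.
case: (eqVneq b (last z s)) => [->|nb].
  by rewrite blk'_last card_s.
apply: leq_trans (bsize b); apply: subset_leq_card; apply/subsetP => w.
rewrite !inE => /andP [wC /eqP E]; rewrite wC /=.
case: (boolP (w \in s)) => ws.
  by move: E; rewrite /blk' ws => E; rewrite E eqxx in nb.
by move: E; have [_ -> _] := notin_s ws => ->.
Qed.

Lemma E10 k : k \in Cov' -> par' k = k -> exists a,
  [/\ a \in Cov', par' a = k, a != k, blk' a = a & l - 1 <= #|[set w in Cs | blk' w == a]|].
Proof.
move=> /cov'_cases [ks|kC|[-> zC]].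
- by move=> E; have := par'N ks; rewrite E eqxx.
- have [-> _ _] := notin_s (Covs kC) => pk.
  have [a [aC pa ak ba sz]] := rprim kC pk.
  have [pa' ba' _] := notin_s (Covs aC).
  exists a; split.
  + by rewrite /Cov' inE aC.
  + by rewrite pa'.
  + exact: ak.
  + by rewrite ba'.
  apply: leq_trans sz _; apply: subset_leq_card; apply/subsetP => w.
  rewrite !inE => /andP [wC /eqP E]; rewrite wC /=.
  case: (boolP (w \in s)) => ws.
    have [_ E'] := unc (sCov ws).
    by move: aC; rewrite -E E' => /Covs; rewrite ws.
  by have [_ -> _] := notin_s ws; rewrite E.
- move=> _; have sz : size s = l - 1 by case: zcase => //; rewrite (negbTE zC).
  exists (last z s); split.
  + by rewrite /Cov' !inE lst_s orbT.
  + rewrite -nth_last par'_nth; last by lia.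
    by rewrite prednK // nth_default.
  + by apply/eqP => E; move: zs; rewrite -E lst_s.
  + by rewrite /blk' lst_s.
  + by rewrite blk'_last card_s sz.
Qed.

Lemma ext_ok : BInv Cs d l Cov' par' blk' h'.
Proof.
split; split.
- exact: E0.
- exact: E1.
- exact: E2.
- exact: E3.
- exact: E4.
- exact: E5.
- exact: E6.
- exact: E7.
- exact: E8.
- split; [exact: E9 | exact: E10].
Qed.

End Ext.

Lemma build (R : realFieldType) (T : finType) (Cs : {set T}) (d : T -> T -> R) (l : nat) :
  l <= #|Cs| -> 1 < l -> exists par blk (h : T -> nat), BInv Cs d l Cs par blk h.
Proof.
move=> lCs l2.
have I0 : BInv Cs d l set0 id id (fun _ => 0).
  split; split.
  - exact: sub0set.
  - by [].
  - by move=> v; rewrite inE.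
  - by move=> x; rewrite eqxx.
  - by move=> v; rewrite inE.
  - by move=> v; rewrite inE.
  - by move=> v; rewrite inE.
  - by move=> v; rewrite inE.
  - by move=> v y; rewrite inE.
  - split; last by move=> k; rewrite inE.
    move=> b; apply: leq_trans (_ : #|[set b]| <= _); last by rewrite cards1; lia.
    by apply: subset_leq_card; apply/subsetP => w; rewrite !inE => /andP [_ ->].
have: forall n (Cov : {set T}) par blk (h : T -> nat), #|Cs| - #|Cov| < n ->
    BInv Cs d l Cov par blk h -> exists par blk (h : T -> nat), BInv Cs d l Cs par blk h;
  last by move=> H; apply: (H _ set0 _ _ _ (ltnSn _) I0).
elim=> [//|n IH] Cov par blk h cn IB.
have IB' := IB; move: IB' => [[CovCs unc pbCov hdec banc] [bpar broot bnroot nn [bsize rprim]]].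
case: (boolP (Cs \subset Cov)) => sub.
  have E : Cov = Cs by apply/eqP; rewrite eqEsubset CovCs sub.
  by exists par, blk, h; rewrite E in IB.
have [y yCs yCov] := subsetPn sub.
have [s [z [us s0 sl sU [zCs zs NNs zcase]]]] := chain_ex d lCs l2 yCs yCov.
have IB2 := ext_ok CovCs unc pbCov hdec banc bpar broot bnroot nn bsize rprim us s0 sl sU zCs zs NNs zcase.
have CovCs' : Cov' Cov s z \subset Cs by case: IB2 => [[]].
have x0 : (head z s) \in s by move: s0; case: (s) => // a s' _; rewrite inE eqxx.
have pr : Cov \proper Cov' Cov s z.
  apply/properP; split.
    by apply/subsetP => x xC; rewrite /Cov' in_setU xC.
  exists (head z s); first by rewrite /Cov' in_setU inE x0 orbT.
  by case: (sU _ x0).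
apply: IH IB2.
have := proper_card pr; have := subset_leq_card CovCs'; lia.
Qed.

Local Open Scope ring_scope.

Theorem lemma4 (R : realFieldType) (T : finType) (F C : {set T})
  (d : T -> T -> R) (x : T -> T -> R) (l0 : nat) :
  (0 < l0)%N ->
  metric_on (F :|: C) d ->
  (forall i j, i \in F -> j \in C -> 0 <= x i j) ->
  (forall j, j \in C -> \sum_(i in F) x i j = 1) ->
  forall Cs : {set T}, greedy_reps F x d l0 C Cs ->
  forall l : nat, (0 < l)%N -> (l <= #|Cs|)%N ->
  exists TT : {set rtree T},
    (forall t, t \in TT -> neighborhood_tree Cs d t) /\
    (forall t, t \in TT -> (l <= #|rt_V t| <= l ^ 2)%N) /\
    \bigcup_(t in TT) rt_V t = Cs /\
    (forall t t', t \in TT -> t' \in TT -> t != t' ->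
       [disjoint (rt_V t :\ rt_r t) & (rt_V t' :\ rt_r t')]).
Proof.
move=> _ _ _ _ Cs _ l lpos lCs.
case: (ltnP 1%N l) => l2; last first.
  have l1 : l = 1%N by lia.
  subst l.
  apply: (@assemble R T Cs d id id (fun _ => 0%N) _ _ 1%N [set (v, [set v]) | v in Cs]).
  - by move=> v; rewrite eqxx.
  - by move=> v y _; rewrite eqxx.
  - move=> p /imsetP [v vC ->] /=; rewrite cards1; split => //.
    split => //.
    + exact: set11.
    + by apply/subsetP => w /set1P ->.
    + by move=> w /set1P ->; rewrite eqxx.
    + by move=> w u /set1P ->; rewrite eqxx.
  - by move=> v vC; exists (v, [set v]); [apply: imset_f | exact: set11].
  - move=> p p' /imsetP [v vC ->] _ _ /=.
    by rewrite setDv -setI_eq0 set0I.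
have [par [blk [h [[CsCs unc pbCov hdec banc] [bpar broot bnroot nn [bsize rprim]]]]]] := build d lCs l2.
have parCs : forall v, v \in Cs -> par v \in Cs by move=> v vC; case: (pbCov v vC).
have [Pcs [P1 P2 P3]] := split_ex l2 hdec parCs banc bpar broot bnroot bsize rprim.
exact: (assemble hdec nn P1 P2 P3).
Qed.
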